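(* Let $X$ be finite and $t$ any transition function. Then $t$ is menu invariant, i.e. there exists $\nu\in\Delta(\mathcal{L}(X))$ with $\nu M_A=\nu$ for all $A\in\mathcal{X}_2$, if and only if $t$ satisfies no weak investment: for every investment plan $i$ there exists $\succ\in\mathcal{L}(X)$ with $$\sum_{(A,\succ')\in\mathcal{X}_2\times\mathcal{L}(X)} i(A,\succ')\,t_{\succ'}(M(\succ,A),\succ)\le\sum_{A\in\mathcal{X}_2}i(A,\succ).$$
   Context: $\mathcal{X}_2$ is the collection of subsets of $X$ with at least two elements, $\mathcal{L}(X)$ the linear orders on $X$, $M(\succ,A)$ the $\succ$-maximal element of $A$. A transition function is $t:X\times\mathcal{L}(X)\to\Delta(\mathcal{L}(X))$, with $t_{\succ'}(x,\succ)$ the probability of $\succ'$ under $t(x,\succ)$. For $A\in\mathcal{X}_2$, $M_A$ is the Markov matrix on $\mathcal{L}(X)$ with entries $m_A(\succ,\succ')=t_{\succ'}(M(\succ,A),\succ)$; distributions are row vectors. An investment plan is any function $i:\mathcal{X}_2\times\mathcal{L}(X)\to\mathbb{R}_{\ge0}$. *)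

(* Defs.v *)
From HB Require Import structures.
From mathcomp Require Import all_boot all_order all_algebra.
From mathcomp Require Import reals.
Set Implicit Arguments. Unset Strict Implicit. Unset Printing Implicit Defensive.
Import Order.TTheory GRing.Theory Num.Theory.
Local Open Scope ring_scope.

Section Defs.
Variable X : finType.

(* A linear order on X, represented by its strict relation x ≻ y as r (x,y):
   irreflexive, transitive and total on distinct elements. *)
Definition is_lin (r : {ffun X * X -> bool}) : bool :=
  [&& [forall x, ~~ r (x, x)],
      [forall x, forall y, forall z, r (x, y) && r (y, z) ==> r (x, z)] &
      [forall x, forall y, (x != y) ==> r (x, y) || r (y, x)]].

Definition linord := {r : {ffun X * X -> bool} | is_lin r}.

Definition succ (r : linord) (x y : X) : bool := val r (x, y).

Definition maxel (r : linord) (A : {set X}) : option X :=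
  [pick x in A | [forall y in A, (y != x) ==> succ r x y]].

Definition inX2 (A : {set X}) : bool := (1 < #|A|)%N.

Variable R : realType.

Definition is_distr (nu : linord -> R) : Prop :=
  (forall r, 0 <= nu r) /\ \sum_(r : linord) nu r = 1.

(* transition function t : X × L(X) → Δ(L(X)); t x r r' = t_{r'}(x, r) *)
Definition is_transition (t : X -> linord -> linord -> R) : Prop :=
  forall x r, is_distr (t x r).

Definition mA (t : X -> linord -> linord -> R) (A : {set X}) (r r' : linord) : R :=
  match maxel r A with Some x => t x r r' | None => 0 end.

Definition menu_invariant (t : X -> linord -> linord -> R) : Prop :=
  exists nu : linord -> R, is_distr nu /\
    forall A, inX2 A -> forall r', \sum_(r : linord) nu r * mA t A r r' = nu r'.

Definition investment_plan (i : {set X} -> linord -> R) : Prop :=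
  forall A r, inX2 A -> 0 <= i A r.

Definition no_weak_investment (t : X -> linord -> linord -> R) : Prop :=
  forall i, investment_plan i -> exists r : linord,
    \sum_(A : {set X} | inX2 A) \sum_(r' : linord) i A r' * mA t A r r'
      <= \sum_(A : {set X} | inX2 A) i A r.
End Defs.

(* Main.v *)
Require Import Defs.
From HB Require Import structures.
From mathcomp Require Import reals.
From mathcomp Require Import all_boot all_order all_algebra.
From mathcomp.algebra_tactics Require Import ring lra.
Set Implicit Arguments. Unset Strict Implicit. Unset Printing Implicit Defensive.
Import Order.TTheory GRing.Theory Num.Theory.
Local Open Scope ring_scope.

Section Gordan.
Variables (R : realFieldType) (K : finType).
Local Notation vec := {ffun K -> R}.
Definition dot (y : K -> R) (g : vec) := \sum_k y k * g k.
Definition GHyp (s : seq vec) := forall y : K -> R, has (fun g => dot y g <= 0) s.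
Definition PC (s : seq vec) := exists w : seq (R * vec),
  [/\ all (fun p => (0 <= p.1) && (p.2 \in s)) w, 0 < \sum_(p <- w) p.1
    & forall k, \sum_(p <- w) p.1 * p.2 k = 0].

Lemma below_ex (us : seq R) : exists t, forall u, u \in us -> t < u.
Proof.
elim: us => [|u us [t Ht]]; first by exists 0.
exists (if t < u then t else u - 1) => v; rewrite inE => /orP[/eqP->|/Ht vt].
  by case: ifP => //; lra.
by case: ifP => // /negbT; rewrite -leNgt => ut; lra.
Qed.

Lemma between_ex l (us : seq R) : (forall u, u \in us -> l < u) ->
  exists t, l < t /\ forall u, u \in us -> t < u.
Proof.
elim: us => [|u us IH] H; first by exists (l + 1); split => //; lra.
have H' : forall v, v \in us -> l < v by move=> v vin; apply: H; rewrite inE vin orbT.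
have [t [lt Ht]] := IH H'.
have lu := H u (mem_head _ _).
exists (if t < u then t else (l + u) / 2); split.
  by case: ifP => //; lra.
move=> v; rewrite inE => /orP[/eqP->|/Ht vt].
  by case: ifP => //; lra.
by case: ifP => // /negbT; rewrite -leNgt => ut; lra.
Qed.

Lemma sep_ex (ls us : seq R) : (forall l u, l \in ls -> u \in us -> l < u) ->
  exists t, (forall l, l \in ls -> l < t) /\ (forall u, u \in us -> t < u).
Proof.
elim: ls => [|l ls IH] H.
  by have [t Ht] := below_ex us; exists t.
have H' : forall a b, a \in ls -> b \in us -> a < b.
  by move=> a b ai bi; apply: H => //; rewrite inE ai orbT.
have [t [Hl Hu]] := IH H'.
case: (boolP (l < t)) => lt.
  by exists t; split => // a; rewrite inE => /orP[/eqP->|/Hl].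
rewrite -leNgt in lt.
have [t' [lt' Ht']] := between_ex (fun u ui => H l u (mem_head _ _) ui).
exists t'; split => // a; rewrite inE => /orP[/eqP->|/Hl] //.
move=> at'; lra.
Qed.

Lemma dot_shift y c t g :
  dot (fun k => y k + (if k == c then t else 0)) g = dot y g + t * g c.
Proof.
rewrite /dot.
transitivity (\sum_k (y k * g k + (if k == c then t else 0) * g k)).
  by apply: eq_bigr => k _; rewrite mulrDl.
rewrite big_split /=.
congr (_ + _); rewrite (bigD1 c) //= eqxx big1 ?addr0 // => k /negbTE ->.
by rewrite mul0r.
Qed.

Definition comb c (g h : vec) : vec := [ffun k => - h c * g k + g c * h k].

Lemma dot_comb y c g h : dot y (comb c g h) = - h c * dot y g + g c * dot y h.
Proof.
rewrite /dot.
transitivity (\sum_k (y k * (- h c * g k) + y k * (g c * h k))).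
  by apply: eq_bigr => k _; rewrite ffunE mulrDr.
rewrite big_split /= !mulr_sumr.
by congr (_ + _); apply eq_bigr => k _; ring.
Qed.

Lemma lift_pc (s s' : seq vec) :
  (forall v, v \in s' -> exists u : seq (R * vec),
     [/\ all (fun p => (0 <= p.1) && (p.2 \in s)) u, 0 < \sum_(p <- u) p.1
       & forall k, \sum_(p <- u) p.1 * p.2 k = v k]) ->
  PC s' -> PC s.
Proof.
move=> dec [w' [wall wpos wsum]].
have: exists w, [/\ all (fun p => (0 <= p.1) && (p.2 \in s)) w,
   (0 < \sum_(p <- w') p.1 -> 0 < \sum_(p <- w) p.1)
 & forall k, \sum_(p <- w) p.1 * p.2 k = \sum_(p <- w') p.1 * p.2 k].
  elim: w' wall {wpos wsum} => [|[a v] w' IH] /=.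
    by move=> _; exists [::]; split => //; rewrite big_nil ltxx.
  case/andP => /andP[a0 vin] wall.
  have [w [H1 H2 H3]] := IH wall.
  have [u [U1 U2 U3]] := dec v vin.
  have Hw0 : 0 <= \sum_(p <- w) p.1.
    rewrite big_seq; apply: sumr_ge0 => p pin.
    by have /andP[] := allP H1 p pin.
  exists ([seq (a * p.1, p.2) | p <- u] ++ w); split.
  - rewrite all_cat H1 andbT; apply/allP => q /mapP[p pu ->] /=.
    by have /andP[p0 ps] := allP U1 p pu; rewrite ps mulr_ge0.
  - rewrite big_cat big_map /= big_cons -mulr_sumr => h.
    move: a0; rewrite le0r => /orP[/eqP a0|apos].
      by rewrite a0 mul0r add0r; apply: H2; move: h; rewrite a0 add0r.
    have := mulr_gt0 apos U2; lra.
  - move=> k; rewrite big_cat big_map big_cons /= H3; congr (_ + _).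
    by rewrite -U3 mulr_sumr; apply eq_bigr => p _; rewrite mulrA.
case=> w [H1 H2 H3]; exists w; split => //; first exact: H2.
by move=> k; rewrite H3.
Qed.

Lemma gordan_ind n : forall (S : {set K}) (s : seq vec), (#|S| <= n)%N ->
  (forall g, g \in s -> forall k, k \notin S -> g k = 0) -> GHyp s -> PC s.
Proof.
elim: n => [|n IH] S s hS supp hyp.
  have S0 : S = set0 by apply/eqP; rewrite -cards_eq0 -leqn0.
  have /hasP[g gin _] := hyp (fun _ => 0).
  exists [:: (1, g)]; split.
  - by rewrite /= gin ler01.
  - by rewrite big_seq1 ltr01.
  - by move=> k; rewrite big_seq1 /= supp ?mulr0 // S0 inE.
case: (leqP #|S| n) => hSn; first exact: IH hSn supp hyp.
have : S != set0 by rewrite -card_gt0; apply: leq_ltn_trans hSn.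
case/set0Pn => c cS.
set P := filter (fun g : vec => 0 < g c) s.
set N := filter (fun g : vec => g c < 0) s.
set Z := filter (fun g : vec => g c == 0) s.
set s' := [seq comb c g h | g <- P, h <- N] ++ Z.
have supp' : forall v, v \in s' -> forall k, k \notin S :\ c -> v k = 0.
  move=> v; rewrite mem_cat => /orP[/allpairsP[[g h] [/= gP hN ->]] | vZ] k;
    rewrite in_setD1 negb_and negbK => /orP[/eqP->|kS].
  - by rewrite ffunE; ring.
  - move: gP hN; rewrite !mem_filter => /andP[_ gs] /andP[_ hs].
    by rewrite ffunE !(supp _ _ k kS) // !mulr0 addr0.
  - by move: vZ; rewrite mem_filter => /andP[/eqP].
  - by move: vZ; rewrite mem_filter => /andP[_ vs]; apply: supp.
have hyp' : GHyp s'.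
  move=> y; case E: (has _ s') => //.
  move/negbT: E; rewrite -all_predC => /allP Hall.
  have Hpos : forall v, v \in s' -> 0 < dot y v.
    by move=> v /Hall /=; rewrite ltNge.
  set ls := [seq - dot y g / g c | g <- P].
  set us := [seq dot y h / (- h c) | h <- N].
  have Hsep : forall a b, a \in ls -> b \in us -> a < b.
    move=> a b /mapP[g gP ->] /mapP[h hN ->].
    have := Hpos (comb c g h); rewrite mem_cat (allpairs_f (comb c) gP hN) => /(_ isT).
    rewrite dot_comb => H.
    move: gP hN; rewrite !mem_filter => /andP[gc _] /andP[hc _].
    rewrite -subr_gt0.
    have -> : dot y h / - h c - (- dot y g / g c)
       = (- h c * dot y g + g c * dot y h) / (g c * - h c).
      by field; rewrite (ltr0_neq0 hc) (lt0r_neq0 gc).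
    by apply: divr_gt0 => //; apply: mulr_gt0 => //; rewrite oppr_gt0.
  have [tt [Hl Hu]] := sep_ex Hsep.
  have /hasP[g gs] := hyp (fun k => y k + (if k == c then tt else 0)).
  rewrite dot_shift leNgt => /negP H0; exfalso; apply: H0.
  have [gpos|gneg|gz] := ltrgtP 0 (g c).
  - have gP : g \in P by rewrite mem_filter gpos.
    have := Hl _ (map_f (fun g => - dot y g / g c) gP).
    rewrite ltr_pdivrMr // => h; lra.
  - have gN : g \in N by rewrite mem_filter gneg.
    have := Hu _ (map_f (fun h => dot y h / (- h c)) gN).
    rewrite ltr_pdivlMr ?oppr_gt0 // mulrN => h; lra.
  - rewrite -gz mulr0 addr0; apply: Hpos.
    by rewrite mem_cat mem_filter -gz eqxx gs orbT.
apply: (@lift_pc s s'); last first.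
  apply: (IH (S :\ c)) => //.
  by move: hS; rewrite (cardsD1 c S) cS add1n ltnS.
move=> v; rewrite mem_cat => /orP[/allpairsP[[g h] [/= gP hN ->]] | vZ].
  move: gP hN; rewrite !mem_filter => /andP[gc gs] /andP[hc hs].
  exists [:: (- h c, g); (g c, h)]; split.
  - by rewrite /= gs hs !andbT oppr_ge0 !ltW.
  - by rewrite big_cons big_seq1 /=; lra.
  - by move=> k; rewrite big_cons big_seq1 /= ffunE.
exists [:: (1, v)]; split.
- by move: vZ; rewrite mem_filter => /andP[_ vs]; rewrite /= vs ler01.
- by rewrite big_seq1 ltr01.
- by move=> k; rewrite big_seq1 mul1r.
Qed.

Lemma gordan s : GHyp s -> PC s.
Proof.
apply: (@gordan_ind #|K| setT) => //; first by rewrite cardsT.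
by move=> g _ k; rewrite in_setT.
Qed.
End Gordan.

Section Main.
Variables (X : finType) (R : realType).
Local Notation L := (linord X).

Lemma maxel_some (r : L) (A : {set X}) : A != set0 -> exists x, maxel r A = Some x.
Proof.
case/set0Pn => x0 xA.
move: (valP r); rewrite /is_lin => /and3P[/forallP irr /forallP tr /forallP tot].
have [m mInA mmax] : exists2 m, m \in A & forall y, y \in A -> y != m -> succ r m y.
  case: (arg_maxnP (fun x => #|[set z in A | succ r x z]|) xA) => m mInA Hm.
  exists m => // y yA ym.
  have := implyP (forallP (tot m) y); rewrite eq_sym ym => /(_ isT) /orP[//|rym].
  have Hle : (#|[set z in A | succ r y z]| <= #|[set z in A | succ r m z]|)%N := Hm y yA.
  suff : (#|[set z in A | succ r m z]| < #|[set z in A | succ r y z]|)%N by rewrite ltnNge Hle.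
  apply: proper_card; apply/properP; split.
    apply/subsetP => z; rewrite !inE => /andP[zA rmz]; rewrite zA /=.
    by apply: (implyP (forallP (forallP (tr y) m) z)); rewrite rym.
  exists m; first by rewrite !inE; apply/andP; split.
  by rewrite !inE negb_and /succ (negbTE (irr m)) orbT.
rewrite /maxel; case: pickP => [x _|H]; first by exists x.
have := H m; rewrite mInA /= => /negbT/negP; case.
by apply/forallP => y; apply/implyP => yA; apply/implyP => ym; exact: mmax.
Qed.

Variable t : X -> L -> L -> R.
Hypothesis trans : is_transition t.

Lemma rowsum A r : inX2 A -> \sum_r' mA t A r r' = 1.
Proof.
move=> XA; have : A != set0 by rewrite -card_gt0; apply: ltnW.
move=> /(maxel_some r) [x Hx]; rewrite /mA Hx; exact: (trans x r).2.
Qed.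

Lemma sum_delta (T : finType) (a : T) (F : T -> R) : \sum_r (a == r)%:R * F r = F a.
Proof.
rewrite (bigD1 a) //= eqxx mul1r big1 ?addr0 // => r ra.
by rewrite eq_sym (negbTE ra) mul0r.
Qed.

Definition gv (r : L) : {ffun ({set X} * L) -> R} :=
  [ffun k => if inX2 k.1 then mA t k.1 r k.2 - (k.2 == r)%:R else 0].

Lemma dot_gv (y : {set X} * L -> R) r :
  dot y (gv r) = \sum_(A | inX2 A) (\sum_r' y (A, r') * mA t A r r' - y (A, r)).
Proof.
rewrite /dot.
transitivity (\sum_A \sum_r' y (A, r') * gv r (A, r')).
  by rewrite pair_bigA; apply: eq_bigr => -[A r'] _.
rewrite [RHS]big_mkcond /=; apply: eq_bigr => A _.
case: ifP => XA.
  transitivity (\sum_r' (y (A, r') * mA t A r r' - (r == r')%:R * y (A, r'))).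
    by apply: eq_bigr => r' _; rewrite ffunE /= XA eq_sym; ring.
  by rewrite sumrB sum_delta.
by rewrite big1 // => r' _; rewrite ffunE /= XA mulr0.
Qed.


Lemma nwi_mi : no_weak_investment t -> menu_invariant t.
Proof.
move=> nwi.
pose s := [seq gv r | r <- enum [pred r : L | true]].
have hyp : GHyp s.
  move=> y.
  pose C := \sum_k `|y k|.
  pose i := fun A r' => y (A, r') + C.
  have ip : investment_plan i.
    move=> A r' _; rewrite /i /C (bigD1 (A, r')) //=.
    have := lerNnormlW (lexx `|y (A, r')|).
    have : 0 <= \sum_(k | k != (A, r')) `|y k| by apply: sumr_ge0 => k _.
    lra.
  have [r Hr] := nwi i ip.
  apply/hasP; exists (gv r); first by apply: map_f; rewrite mem_enum.
  rewrite dot_gv.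
  suff -> : \sum_(A | inX2 A) (\sum_r' y (A, r') * mA t A r r' - y (A, r)) =
     \sum_(A | inX2 A) \sum_r' i A r' * mA t A r r' - \sum_(A | inX2 A) i A r.
    by rewrite subr_le0.
  rewrite -sumrB; apply: eq_bigr => A XA; rewrite /i.
  transitivity (\sum_r' y (A, r') * mA t A r r' + C * \sum_r' mA t A r r' - (y (A, r) + C)).
    by rewrite rowsum // mulr1; ring.
  rewrite mulr_sumr -big_split /=; congr (_ - _); apply: eq_bigr => r' _; ring.
have [w [wall wpos wsum]] := gordan hyp.
have conv : forall w : seq (R * {ffun ({set X} * L) -> R}),
    all (fun p => (0 <= p.1) && (p.2 \in s)) w ->
    exists wr : seq (R * L), w = [seq (p.1, gv p.2) | p <- wr] /\ all (fun p => 0 <= p.1) wr.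
  elim => [|[a v] w' IH] /=; first by exists [::].
  case/andP => /andP[a0 /mapP[r _ ->]] /IH [wr [-> H]].
  by exists ((a, r) :: wr); split => //=; rewrite a0 H.
have [wr [Ew Hwr]] := conv w wall.
move: wpos wsum; rewrite Ew big_map /= => wpos wsum.
pose W := \sum_(p <- wr) p.1.
have W0 : W != 0 by rewrite lt0r_neq0.
pose nu := fun r : L => (\sum_(p <- wr) p.1 * (p.2 == r)%:R) / W.
have key : forall F : L -> R, \sum_r (\sum_(p <- wr) p.1 * (p.2 == r)%:R) * F r
                             = \sum_(p <- wr) p.1 * F p.2.
  move=> F; under eq_bigr do rewrite mulr_suml.
  rewrite exchange_big /=; apply: eq_bigr => p _.
  by under eq_bigr do rewrite -mulrA; rewrite -mulr_sumr sum_delta.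
exists nu; split; first split.
- move=> r; apply: divr_ge0; last by apply: ltW.
  rewrite big_seq; apply: sumr_ge0 => p pin.
  by apply: mulr_ge0; [exact: (allP Hwr p pin)|exact: ler0n].
- rewrite /nu -mulr_suml.
  have := key (fun _ => 1); under eq_bigr do rewrite mulr1.
  move=> ->; under eq_bigr do rewrite mulr1; exact: mulfV.
- move=> A XA r'.
  rewrite /nu; under eq_bigr do rewrite mulrAC; rewrite -mulr_suml key.
  congr (_ / W); apply/eqP; rewrite -subr_eq0 -sumrB; apply/eqP.
  rewrite -[RHS](wsum (A, r')); rewrite big_map; apply: eq_bigr => p _.
  by rewrite ffunE /= XA eq_sym; ring.
Qed.

Lemma mi_nwi : menu_invariant t -> no_weak_investment t.
Proof.
move=> [nu [[nu0 nu1] inv]] i ip.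
pose d := fun r => \sum_(A | inX2 A) \sum_r' i A r' * mA t A r r' - \sum_(A | inX2 A) i A r.
case: (pickP (fun r => d r <= 0)) => [r Hr|H]; first by exists r; rewrite -subr_le0.
exfalso.
have Hd : forall r, 0 < d r by move=> r; rewrite ltNge H.
have key : \sum_r nu r * d r = 0.
  rewrite /d; under eq_bigr do rewrite mulrBr; rewrite sumrB; apply/eqP; rewrite subr_eq0; apply/eqP.
  under eq_bigr do rewrite mulr_sumr; rewrite exchange_big /=.
  under [RHS]eq_bigr do rewrite mulr_sumr; rewrite [RHS]exchange_big /=.
  apply: eq_bigr => A XA.
  under eq_bigr do rewrite mulr_sumr; rewrite exchange_big /=.
  apply: eq_bigr => r' _.
  rewrite -(inv A XA r') mulr_suml; apply: eq_bigr => r _; ring.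
have H0 : forall r, nu r * d r = 0.
  have Hnn : forall r, true -> 0 <= nu r * d r.
    by move=> r0 _; apply: mulr_ge0 => //; apply: ltW.
  by move=> r; exact: (psumr_eq0P Hnn key).
have : \sum_r nu r = 0.
  apply: big1 => r _; have := H0 r; move/eqP; rewrite mulf_eq0 => /orP[/eqP //|].
  by rewrite (negbTE (lt0r_neq0 (Hd r))).
by rewrite nu1 => /eqP; rewrite oner_eq0.
Qed.

End Main.

Theorem theorem9 (X : finType) (R : realType) (t : X -> linord X -> linord X -> R) :
  is_transition t -> (menu_invariant t <-> no_weak_investment t).
Proof. by move=> tr; split; [apply: mi_nwi | apply: nwi_mi]. Qed.
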